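(* Let $m$, $E$ and the chaos notation be as in the context, let $f\in L^2_{\mathbb{R}}(\mathcal{H},\mathcal{B},m)$ and let $k$ be a positive integer such that the $k$-linear form $\mathcal{B}_{f_k}$ is bounded. Then the series $\sum_{(i_1,\dots,i_k)\in(\mathbb{Z}^* )^k}|\alpha^{(k)}_{i_1,\dots,i_k}|^2\sigma_{i_1}^2\cdots\sigma_{i_{k-1}}^2$ converges and $$\sum_{(i_1,\dots,i_k)\in(\mathbb{Z}^* )^k}\big|\alpha^{(k)}_{i_1,\dots,i_k}\big|^2\sigma_{i_1}^2\cdots\sigma_{i_{k-1}}^2\le\|\mathcal{B}_{f_k}\|^2\,\|E\|_2^{2(k-1)}.$$
   Context: $\mathcal{H}$ complex separable infinite-dimensional Hilbert space (inner product linear in second variable). $T$ bounded with a $\mu$-spanning $\mathbb{T}$-eigenvector field $E$ (bounded $E:\mathbb{T}\to\mathcal{H}$, $TE(\lambda)=\lambda E(\lambda)$, dense span of $\{E(\lambda):\lambda\in A\}$ whenever $\mu(A)=1$, $\mu$ normalized Lebesgue measure on the unit circle $\mathbb{T}$); $\|E\|_2^2=\int\|E(\lambda)\|^2d\mu$. $R$: $\langle Rx,y\rangle=\int\langle x,E(\lambda)\rangle\overline{\langle y,E(\lambda)\rangle}d\mu$; $m$ the Gaussian measure with covariance $R$. $(e_j)_{j\ge1}$ orthonormal eigenbasis of $R$, $Re_j=2\sigma_j^2e_j$; $\mathbb{Z}^*=\mathbb{Z}\setminus\{0\}$, $\mathfrak{e}_\ell=e_\ell$, $\mathfrak{e}_{-\ell}=ie_\ell$,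 $\sigma_{-\ell}=\sigma_\ell$. $L^2_{\mathbb{R}}$ real-valued part of $L^2(m)$; $\mathcal{G}$ closed span of $\mathfrak{Re}\langle\mathfrak{e}_k,\cdot\rangle$; $\mathcal{G}^k$ span of $k$-fold products; $:h:=h-P_kh$, $P_k$ projection onto closed span of $\mathcal{G}^0,\dots,\mathcal{G}^{k-1}$; $:\mathcal{G}^k:$ closure of Wick transforms; $f_k$ projection of $f$ onto $:\mathcal{G}^k:$. $\alpha^{(k)}_{i_1,\dots,i_k}=\langle f,:\mathfrak{Re}\langle\mathfrak{e}_{i_1},\cdot\rangle\cdots\mathfrak{Re}\langle\mathfrak{e}_{i_k},\cdot\rangle:\rangle_{L^2(m)}/(k!\sigma_{i_1}^2\cdots\sigma_{i_k}^2)$ (the symmetric coefficients with $f_k=\sum_{(\mathbb{Z}^* )^k}\alpha^{(k)}_{i_1,\dots,i_k}:\mathfrak{Re}\langle\mathfrak{e}_{i_1},\cdot\rangle\cdots\mathfrak{Re}\langle\mathfrak{e}_{i_k},\cdot\rangle:$), and $\mathcal{B}_{f_k}(x^{(1)},\dots,x^{(k)})=\sum_{(\mathbb{Z}^* )^k}\alpha^{(k)}_{i_1,\dots,i_k}x^{(1)}_{i_1}\cdots x^{(k)}_{i_k}$ on $\ell_2(\mathbb{Z}^*,\mathbb{R})^k$; bounded means well defined with $|\mathcal{B}_{f_k}(x^{(1)},\dots)|\le C\prod\|x^{(j)}\|_2$, $\|\mathcal{B}_{f_k}\|$ the sup over unit vectors. *)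

(* Defs.v *)
From HB Require Import structures.
From mathcomp Require Import all_boot all_order all_algebra.
From mathcomp Require Import all_classical all_reals all_analysis.
Set Implicit Arguments. Unset Strict Implicit. Unset Printing Implicit Defensive.
Import Order.TTheory GRing.Theory Num.Theory.
Local Open Scope classical_set_scope.
Local Open Scope ring_scope.

(* H is a real vector space (lmodType R) with a real inner product ip        *)
(* (= Re <.,.>) and a complex structure J (= multiplication by i).           *)
(* The complex inner product, linear in the SECOND variable, is              *)
(*      <x, y> = ip x y + i * ip (J x) y.                                    *)
Section Hilbert.
Variables (R : realType) (H : lmodType R).

(* pointed copy of H (needed to build the Borel sigma-algebra type) *)
Definition Hp : Type := H.
HB.instance Definition _ := Choice.on Hp.
HB.instance Definition _ := isPointed.Build Hp (0 : H).

Variables (ip : H -> H -> R) (J : H -> H).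

Definition nrm (x : H) : R := Num.sqrt (ip x x).

Definition cipRe (x y : H) : R := ip x y.
Definition cipIm (x y : H) : R := ip (J x) y.

Definition cscale (a b : R) (v : H) : H := a *: v + b *: J v.

Definition is_complex_Hilbert : Prop :=
  (forall x y, ip x y = ip y x) /\
  (forall (a : R) x y z, ip (a *: x + y) z = a * ip x z + ip y z) /\
  (forall x, 0 <= ip x x) /\
  (forall x, ip x x = 0 -> x = 0) /\
  (forall (a : R) x y, J (a *: x + y) = a *: J x + J y) /\
  (forall x, J (J x) = - x) /\
  (forall x y, ip (J x) (J y) = ip x y) /\
  (forall u : nat -> H,
     (forall eps : R, 0 < eps -> exists N, forall p q, (N <= p)%N -> (N <= q)%N ->
        nrm (u p - u q) < eps) ->
     exists x, forall eps : R, 0 < eps -> exists N, forall n, (N <= n)%N ->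
        nrm (u n - x) < eps).

Definition cspan_dense (S : set H) : Prop :=
  forall (x : H) (eps : R), 0 < eps ->
    exists n (a b : 'I_n -> R) (v : 'I_n -> H),
      (forall i, S (v i)) /\ nrm (x - \sum_(i < n) cscale (a i) (b i) (v i)) < eps.

Definition bounded_clinear (T : H -> H) : Prop :=
  (forall (a : R) x y, T (a *: x + y) = a *: T x + T y) /\
  (forall x, T (J x) = J (T x)) /\
  (exists M : R, forall x, nrm (T x) <= M * nrm x).

(* The unit circle is parametrised by t in [0,1[, lambda = exp(2 i pi t);   *)
(* the normalised Lebesgue measure mu on the circle is Lebesgue measure on   *)
(* [0,1[.  A field E : T -> H is represented by t |-> E(exp(2 i pi t)).     *)
Definition spanning_T_eigenfield (T : H -> H) (E : R -> H) : Prop :=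
  (exists M : R, forall t, 0 <= t < 1 -> nrm (E t) <= M) /\
  (forall y : H, measurable_fun (`[0%R, 1%R[ : set R) (fun t : R => ip y (E t))) /\
  (forall t, 0 <= t < 1 ->
     T (E t) = cscale (cos (2 * pi * t)) (sin (2 * pi * t)) (E t)) /\
  (forall A : set R, measurable A -> A `<=` `[0%R, 1%R[ ->
     lebesgue_measure A = 1%E -> cspan_dense (E @` A)).

Definition E2sq (E : R -> H) : R :=
  \int[lebesgue_measure]_(t in `[0%R, 1%R[) ip (E t) (E t).

(* <R x, y> = int <x, E> conj <y, E> dmu, for all x y (real and imaginary parts) *)
Definition is_covariance_of (E : R -> H) (Rop : H -> H) : Prop :=
  forall x y,
    cipRe (Rop x) y = \int[lebesgue_measure]_(t in `[0%R, 1%R[)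
        (cipRe x (E t) * cipRe y (E t) + cipIm x (E t) * cipIm y (E t)) /\
    cipIm (Rop x) y = \int[lebesgue_measure]_(t in `[0%R, 1%R[)
        (cipIm x (E t) * cipRe y (E t) - cipRe x (E t) * cipIm y (E t)).

Definition is_ONB (e : nat -> H) : Prop :=
  (forall j l, (0 < j)%N -> (0 < l)%N ->
     cipRe (e j) (e l) = (j == l)%:R /\ cipIm (e j) (e l) = 0) /\
  cspan_dense (e @` [set j | (0 < j)%N]).

Definition Hopen (A : set Hp) : Prop :=
  forall x : H, A x -> exists eps : R, 0 < eps /\
    forall y : H, nrm (y - x) < eps -> A y.

Definition HBorel := g_sigma_algebraType Hopen.

(* m is the (centred) Gaussian measure with covariance operator Rop :         *)
(*   int exp(i Re<y,u>) dm(u) = exp(- <R y, y> / 4)  for every y,           *)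
(* i.e. Re<y,.> ~ N(0, <Ry,y>/2) and int <x,u> conj<y,u> dm(u) = <Rx,y>.     *)
Definition is_gaussian_cov (Rop : H -> H) (m : probability HBorel R) : Prop :=
  forall y : H,
    \int[m]_(u in setT) cos (ip y u) = expR (- (ip (Rop y) y) / 4) /\
    \int[m]_(u in setT) sin (ip y u) = 0.

Definition frake (e : nat -> H) (i : int) : H :=
  if (0 < i)%R then e `|i|%N else J (e `|i|%N).

End Hilbert.

Arguments is_gaussian_cov [R H] ip Rop m.

Definition sigZ (R : realType) (sigma : nat -> R) (i : int) : R := sigma `|i|%N.

Section Chaos.
Variables (R : realType) (d : measure_display) (T : measurableType d)
  (m : probability T R).

Definition L2R (g : T -> R) : Prop :=
  measurable_fun setT g /\ (\int[m]_x ((g x) ^+ 2)%:E < +oo)%E.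

Definition spanR (S : set (T -> R)) : set (T -> R) :=
  fun g => exists n (c : 'I_n -> R) (s : 'I_n -> T -> R),
    (forall i, S (s i)) /\ g = (fun u => \sum_(i < n) c i * s i u).

Definition L2closure (S : set (T -> R)) : set (T -> R) :=
  fun g => L2R g /\ forall eps : R, 0 < eps ->
    exists h, S h /\ (\int[m]_x (((g x - h x) ^+ 2)%:E) < eps%:E)%E.

(* G = closed span of the Re<frak e_k, .>, given the family phi k = Re<frak e_k,.> *)
Definition Gspace (phi : int -> T -> R) : set (T -> R) :=
  L2closure (spanR [set phi i | i in [set i : int | i != 0]]).

Definition Gpow (phi : int -> T -> R) (j : nat) : set (T -> R) :=
  spanR (fun g => exists gs : 'I_j -> T -> R,
     (forall i, Gspace phi (gs i)) /\ g = (fun u => \prod_(i < j) gs i u)).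

Definition Vbelow (phi : int -> T -> R) (k : nat) : set (T -> R) :=
  L2closure (spanR (fun g => exists j, (j < k)%N /\ Gpow phi j g)).

(* w = :h: = h - P_k h, P_k the orthogonal projection onto Vbelow k *)
Definition is_wick (phi : int -> T -> R) (k : nat) (h w : T -> R) : Prop :=
  L2R w /\ Vbelow phi k (fun u => h u - w u) /\
  forall v, Vbelow phi k v -> (\int[m]_u ((w u * v u)%:E) = 0)%E.

End Chaos.

Section Multilinear.
Variables (R : realType) (k : nat).

Definition nzZ : set int := [set n : int | n != 0].
Definition Zstar_k : set {ffun 'I_k -> int} := [set i | forall j, i j != 0].

Definition l2Z (x : int -> R) : Prop :=
  (\esum_(n in nzZ) ((x n) ^+ 2)%:E < +oo)%E.
Definition l2normZ (x : int -> R) : R :=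
  Num.sqrt (fine (\esum_(n in nzZ) ((x n) ^+ 2)%:E)).

Definition idxN (N : nat) (t : 'I_(N.*2.+1)) : int := (t : nat)%:Z - N%:Z.

(* partial sum of B over the box ([-N,N] \ {0})^k *)
Definition boxsum (alpha : {ffun 'I_k -> int} -> R) (x : 'I_k -> int -> R)
    (N : nat) : R :=
  \sum_(t : {ffun 'I_k -> 'I_(N.*2.+1)} | [forall j, idxN (t j) != 0])
     alpha [ffun j => idxN (t j)] * \prod_(j < k) x j (idxN (t j)).

(* B(x^(1),...,x^(k)) is well defined (box partial sums converge) with value L *)
Definition Bvalue (alpha : {ffun 'I_k -> int} -> R) (x : 'I_k -> int -> R)
    (L : R) : Prop :=
  forall eps : R, 0 < eps -> exists N0, forall N, (N0 <= N)%N ->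
    `|boxsum alpha x N - L| < eps.

Definition B_bounded (alpha : {ffun 'I_k -> int} -> R) : Prop :=
  exists C : R, forall x : 'I_k -> int -> R, (forall j, l2Z (x j)) ->
    exists L, Bvalue alpha x L /\ `|L| <= C * \prod_(j < k) l2normZ (x j).

Definition B_norm (alpha : {ffun 'I_k -> int} -> R) : R :=
  sup [set r : R | exists (x : 'I_k -> int -> R) (L : R),
         (forall j, l2Z (x j) /\ l2normZ (x j) = 1) /\
         Bvalue alpha x L /\ r = `|L|].

End Multilinear.

(* Main.v *)
Require Import Defs.
From HB Require Import structures.
From mathcomp Require Import all_boot all_order all_algebra.
From mathcomp Require Import all_classical all_reals all_analysis.
From mathcomp Require Import ring lra zify.
Import Order.TTheory GRing.Theory Num.Theory measurable_realfun.
Set Implicit Arguments. Unset Strict Implicit. Unset Printing Implicit Defensive.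
Local Open Scope classical_set_scope.
Local Open Scope ring_scope.
Section Hil.
Variables (R : realType) (H : lmodType R) (ip : H -> H -> R) (J : H -> H).
Hypothesis hH : is_complex_Hilbert ip J.

Lemma ip_sym x y : ip x y = ip y x.
Proof. by case: hH. Qed.
Lemma ip_lin a x y z : ip (a *: x + y) z = a * ip x z + ip y z.
Proof. by case: hH => _ [h _]. Qed.
Lemma ip0l z : ip 0 z = 0.
Proof.
have := ip_lin 1 0 0 z; rewrite scaler0 addr0 mul1r => h.
lra.
Qed.
Lemma ipZl a x z : ip (a *: x) z = a * ip x z.
Proof. by have := ip_lin a x 0 z; rewrite addr0 ip0l addr0. Qed.
Lemma ipDl x y z : ip (x + y) z = ip x z + ip y z.
Proof. by have := ip_lin 1 x y z; rewrite scale1r mul1r. Qed.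
Lemma ipNl x z : ip (- x) z = - ip x z.
Proof. by rewrite -scaleN1r ipZl mulN1r. Qed.
Lemma ipBl x y z : ip (x - y) z = ip x z - ip y z.
Proof. by rewrite ipDl ipNl. Qed.
Lemma ipBr x y z : ip z (x - y) = ip z x - ip z y.
Proof. by rewrite ip_sym ipBl !(ip_sym _ z). Qed.
Lemma ip_sumZl (I : Type) (s : seq I) (c : I -> R) (v : I -> H) z :
  ip (\sum_(i <- s) c i *: v i) z = \sum_(i <- s) c i * ip (v i) z.
Proof.
elim: s => [|a s IH]; first by rewrite !big_nil ip0l.
by rewrite !big_cons ipDl ipZl IH.
Qed.
Lemma ip_sumZr (I : Type) (s : seq I) (c : I -> R) (v : I -> H) z :
  ip z (\sum_(i <- s) c i *: v i) = \sum_(i <- s) c i * ip z (v i).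
Proof. by rewrite ip_sym ip_sumZl; apply: eq_bigr => i _; rewrite ip_sym. Qed.
Lemma ip_JJ x y : ip (J x) (J y) = ip x y.
Proof. by case: hH => _ [_ [_ [_ [_ [_ [h _]]]]]]. Qed.

Variable (e : nat -> H).
Hypothesis he : is_ONB ip J e.

Lemma fr_on (q q' : int) : q != 0 -> q' != 0 ->
  ip (frake J e q) (frake J e q') = (q == q')%:R.
Proof.
move=> q0 q'0; case: he => hon _.
have pa : (0 < `|q|)%N by rewrite absz_gt0.
have pb : (0 < `|q'|)%N by rewrite absz_gt0.
have [h1 h2] := hon _ _ pa pb; have [h3 h4] := hon _ _ pb pa.
rewrite /frake /cipRe /cipIm in h1 h2 h3 h4 *.
case: (ltrP 0 q) => hq; case: (ltrP 0 q') => hq'.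
- rewrite h1; have -> // : (`|q|%N == `|q'|%N) = (q == q') by apply/idP/idP => /eqP h; apply/eqP; lia.
- rewrite ip_sym h4; have -> : (q == q') = false by apply/eqP; lia. by [].
- rewrite h2; have -> : (q == q') = false by apply/eqP; lia. by [].
- rewrite ip_JJ h1; have -> // : (`|q|%N == `|q'|%N) = (q == q') by apply/idP/idP => /eqP h; apply/eqP; lia.
Qed.

Lemma bessel (G : seq int) x : uniq G -> all (fun q => q != 0) G ->
  \sum_(q <- G) (ip (frake J e q) x) ^+ 2 <= ip x x.
Proof.
move=> uG nz.
set c := fun q => ip (frake J e q) x.
set S := \sum_(q <- G) c q *: frake J e q.
have hS : forall q0, q0 \in G -> ip (frake J e q0) S = c q0.
  move=> q0 q0G; rewrite /S ip_sumZr.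
  rewrite (eq_big_seq (fun q => if q == q0 then c q else 0)); last first.
    move=> q qG; rewrite fr_on; last by move/allP: nz => /(_ q qG).
      by rewrite eq_sym; case: eqP => [->|]; rewrite ?mulr1 ?mulr0.
    by move/allP: nz => /(_ q0 q0G).
  rewrite (bigD1_seq q0) //= eqxx big1 ?addr0 // => q /negbTE -> //.
have hSx : ip S x = \sum_(q <- G) c q ^+ 2.
  by rewrite /S ip_sumZl; apply: eq_bigr => q _; rewrite expr2.
have hSS : ip S S = \sum_(q <- G) c q ^+ 2.
  rewrite {1}/S ip_sumZl; apply: eq_big_seq => q qG; rewrite hS // expr2.
have : 0 <= ip (x - S) (x - S) by case: hH => _ [_ [h _]].
rewrite ipBl !ipBr hSS (ip_sym x S) hSx.
move=> h; rewrite -subr_ge0; lra.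
Qed.
End Hil.

Section Tr.
Variables (R : realType) (H : lmodType R) (ip : H -> H -> R) (J : H -> H).
Hypothesis hH : is_complex_Hilbert ip J.
Variables (T : H -> H) (E : R -> H).
Hypothesis hE : spanning_T_eigenfield ip J T E.

Local Notation D := ([set` `[0%R, 1%R[] : set R).
Local Notation mu := (@lebesgue_measure R).

Lemma mD : measurable D.
Proof. exact: measurable_itv. Qed.

Lemma muD : mu D = 1%E.
Proof. by rewrite lebesgue_measure_itv /= lte_fin ltr01 /= oppr0 adde0. Qed.

Lemma bnd_int (g : R -> R) (c : R) : measurable_fun D g ->
  (forall t, D t -> `|g t| <= c) -> mu.-integrable D (EFin \o g).
Proof.
move=> mg hg.
apply: (@le_integrable _ _ _ mu D mD (EFin \o g) (EFin \o cst c)).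
- by apply/measurable_EFinP.
- move=> t Dt /=; rewrite lee_fin; apply: le_trans (hg t Dt) _.
  by rewrite ler_norm.
- apply/integrableP; split; first exact: (measurable_cst (c%:E)).
  rewrite (_ : (fun x => _) = cst (`|c|%:E)); last by apply/funext.
  rewrite (integral_cst mu mD); apply: lte_mul_pinfty => //.
  have h : (mu D < +oo)%E by rewrite lebesgue_measure_itv /= lte_fin ltr01 /= oppr0 adde0 ltry.
  exact: h.
Qed.

Lemma E_bound : exists M, forall t, D t -> 0 <= ip (E t) (E t) <= M.
Proof.
case: hE => [[M0 hM] _].
exists (M0 ^+ 2) => t; rewrite /= in_itv /= => /andP [t0 t1].
have h0 : 0 <= ip (E t) (E t) by case: hH => _ [_ [h _]].
rewrite h0 /= -(sqr_sqrtr h0).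
have := hM t; rewrite /nrm t0 t1 => /(_ isT) h.
apply: lerXn2r => //; rewrite nnegrE ?sqrtr_ge0 //.
by apply: le_trans h; rewrite sqrtr_ge0.
Qed.

Lemma inner_le (g f : R -> R) : (forall t, D t -> 0 <= g t <= f t) ->
  (\int[mu]_(t in D) (g t)%:E <= \int[mu]_(t in D) (f t)%:E)%E.
Proof.
move=> hgf.
have g0 : forall t, D t -> (0 <= (g t)%:E)%E.
  by move=> t Dt; rewrite lee_fin; case/andP: (hgf t Dt).
have f0 : forall t, D t -> (0 <= (f t)%:E)%E.
  by move=> t Dt; rewrite lee_fin; case/andP: (hgf t Dt) => h1 h2; apply: le_trans h2.
rewrite (ge0_integralE mu g0) (ge0_integralE mu f0).
apply: le_ereal_sup => _ [h hh <-]; exists h => //= t.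
apply: le_trans (hh t) _; rewrite !patchE; case: ifP => // /set_mem Dt.
by rewrite lee_fin; case/andP: (hgf t Dt).
Qed.

Lemma E2_fin : (\int[mu]_(t in D) (ip (E t) (E t))%:E)%E \is a fin_num.
Proof.
have [M hM] := E_bound.
rewrite ge0_fin_numE; last first.
  by apply: integral_ge0 => t Dt; rewrite lee_fin; case/andP: (hM t Dt).
apply: (le_lt_trans (inner_le (f:=fun=> M) hM)).
rewrite (_ : (fun t => _) = cst M%:E) //.
rewrite (integral_cst mu mD); apply: lte_mul_pinfty => //.
- have [t Dt] : exists t, D t by exists 0; rewrite /= in_itv /= lexx ltr01.
  by case/andP: (hM t Dt) => h1 h2; rewrite lee_fin; exact: le_trans h1 h2.
have h : (mu D < +oo)%E by rewrite lebesgue_measure_itv /= lte_fin ltr01 /= oppr0 adde0 ltry.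
exact: h.
Qed.

Lemma Rint_le_E2 (g : R -> R) : (forall t, D t -> 0 <= g t <= ip (E t) (E t)) ->
  mu.-integrable D (EFin \o g) -> Rintegral mu D g <= E2sq ip E.
Proof.
move=> hg ig; rewrite /E2sq /Rintegral.
apply: fine_le; [apply: (integrable_fin_num _ ig); exact: measurable_itv| exact: E2_fin| exact: inner_le].
Qed.

Lemma E2_ge0 : 0 <= E2sq ip E.
Proof.
rewrite /E2sq /Rintegral; apply: fine_ge0; apply: integral_ge0 => t Dt.
by rewrite lee_fin; case: hH => _ [_ [h _]].
Qed.

Lemma int_sum (I : Type) (s : seq I) (g : I -> R -> R) :
  (forall i, mu.-integrable D (EFin \o g i)) ->
  mu.-integrable D (EFin \o (fun t => \sum_(i <- s) g i t)).
Proof.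
move=> ig.
have := @integrable_sum _ _ _ mu D mD I s xpredT (fun i => EFin \o g i) (fun i _ => ig i).
by apply: eq_integrable => // t _ /=; rewrite sumEFin.
Qed.

Lemma Rint_sum (I : Type) (s : seq I) (g : I -> R -> R) :
  (forall i, mu.-integrable D (EFin \o g i)) ->
  \sum_(i <- s) Rintegral mu D (g i) = Rintegral mu D (fun t => \sum_(i <- s) g i t).
Proof.
move=> ig; elim: s => [|a s IH].
  rewrite big_nil (_ : (fun t => _) = fun=> 0); last by apply/funext => t; rewrite big_nil.
  by rewrite Rintegral_cst ?mul0r //; exact: measurable_itv.
rewrite big_cons IH (_ : (fun t => \sum_(i <- a :: s) g i t) = fun t => g a t + \sum_(i <- s) g i t); last first.
  by apply/funext => t; rewrite big_cons.
by rewrite (@RintegralD _ _ _ mu D _ _ mD (ig a) (int_sum s ig)).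
Qed.

Variables (e : nat -> H) (Rop : H -> H) (sigma : nat -> R).
Hypothesis he : is_ONB ip J e.
Hypothesis hR : is_covariance_of ip J E Rop.
Hypothesis heig : forall j, (0 < j)%N -> Rop (e j) = (2 * sigma j ^+ 2) *: e j.

Local Notation fr := (frake J e).
Local Notation a q := (fun t => ip (fr q) (E t) ^+ 2).

Lemma sig2 (q : int) : q != 0 ->
  2 * sigZ sigma q ^+ 2 = Rintegral mu D (fun t => a q t + a (- q) t).
Proof.
move=> q0; have j0 : (0 < `|q|)%N by rewrite absz_gt0.
have [h _] := hR (e `|q|%N) (e `|q|%N).
have [hon _] := he; have [e1 _] := hon _ _ j0 j0.
rewrite /cipRe heig // (ipZl hH) in h; have e1' : ip (e `|q|%N) (e `|q|%N) = 1 by rewrite -[LHS]/(cipRe _ _ _) e1 eqxx.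
rewrite e1' mulr1 in h; rewrite /sigZ h.
congr (Rintegral _ _ _); apply/funext => t /=.
rewrite /frake /cipIm /cipRe abszN oppr_gt0.
case: (ltrP 0 q) => hq.
  by rewrite (_ : (q < 0) = false) ?expr2 //; apply/negbTE; rewrite -leNgt ltW.
rewrite le_eqVlt (negbTE q0) /= in hq.
by rewrite hq addrC !expr2.
Qed.

Lemma meas_a q : measurable_fun D (a q).
Proof.
have [_ [hm _]] := hE.
rewrite (_ : a q = (fun t => ip (fr q) (E t)) \* (fun t => ip (fr q) (E t))); last first.
  by apply/funext => t /=; rewrite expr2.
by apply: measurable_funM; apply: hm.
Qed.

Lemma a_le q : q != 0 -> forall t, 0 <= a q t <= ip (E t) (E t).
Proof.
move=> q0 t; rewrite sqr_ge0 /=.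
by have := @bessel _ _ _ _ hH _ he [:: q] (E t) isT; rewrite /= q0 big_seq1 => /(_ isT).
Qed.

Definition a' q := fun t => if q == 0 then 0 else a q t.

Lemma int_a' q : mu.-integrable D (EFin \o a' q).
Proof.
have [M hM] := E_bound.
apply: (bnd_int (c := M)).
- rewrite /a'; case: eqP => _; [exact: measurable_cst | exact: meas_a].
- move=> t Dt; rewrite /a'; case: eqP => q0.
    by rewrite normr0; case/andP: (hM t Dt) => h1 h2; exact: le_trans h1 h2.
  have /andP [h1 h2] := a_le (introN eqP q0) t.
  rewrite ger0_norm //; apply: le_trans h2 _; by case/andP: (hM t Dt).
Qed.

Lemma half_bound (G : seq int) : uniq G -> all (fun q => q != 0) G ->
  \sum_(q <- G) Rintegral mu D (a' q) <= E2sq ip E.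
Proof.
move=> uG nz; rewrite (Rint_sum G int_a').
apply: Rint_le_E2; last exact: int_sum int_a'.
move=> t Dt; rewrite (eq_big_seq (fun q => a q t)); last first.
  by move=> q qG; rewrite /a'; move/allP: nz => /(_ q qG) /negbTE ->.
rewrite sumr_ge0 /=; last by move=> q _; rewrite sqr_ge0.
exact: (@bessel _ _ _ _ hH _ he G (E t) uG nz).
Qed.

Lemma trace_bound (G : seq int) : uniq G -> all (fun q => q != 0) G ->
  \sum_(q <- G) sigZ sigma q ^+ 2 <= E2sq ip E.
Proof.
move=> uG nz.
have h2 : 2 * \sum_(q <- G) sigZ sigma q ^+ 2 =
   \sum_(q <- G) Rintegral mu D (a' q) + \sum_(q <- map -%R G) Rintegral mu D (a' q).
  rewrite mulr_sumr big_map -big_split /=; apply: eq_big_seq => q qG.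
  have q0 : q != 0 by move/allP: nz => /(_ q qG).
  rewrite sig2 //.
  rewrite -(@RintegralD _ _ _ mu D _ _ mD (int_a' q) (int_a' (- q))).
  congr (Rintegral _ _ _); apply/funext => t.
  by rewrite /a' (negbTE q0) oppr_eq0 (negbTE q0).
have b1 := half_bound uG nz.
have b2 : \sum_(q <- map -%R G) Rintegral mu D (a' q) <= E2sq ip E.
  apply: half_bound; first by rewrite (map_inj_uniq (@oppr_inj _)).
  by rewrite all_map; apply/allP => q qG /=; rewrite oppr_eq0; move/allP: nz => /(_ q qG).
lra.
Qed.
End Tr.
Section Row.
Variables (R : realType).

Lemma esum_seq (y : int -> R) (Q : seq int) : uniq Q -> all (fun q => q != 0) Q ->
  (forall n, n \notin Q -> y n = 0) ->
  \esum_(n in nzZ) ((y n) ^+ 2)%:E = (\sum_(q <- Q) y q ^+ 2)%:E.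
Proof.
move=> uQ nz yQ.
rewrite esum_mkcond.
rewrite (eq_esum (b := fun i => if i \in [set` Q] then ((y i) ^+ 2)%:E else 0)); last first.
  move=> i _; rewrite /nzZ.
  case: (boolP (i \in Q)) => iQ.
    have i0 : i != 0 by move/allP: nz => /(_ i iQ).
    have -> : i \in [set n : int | n != 0] by apply/mem_set.
    by have -> : i \in [set` Q] by apply/mem_set.
  by rewrite (yQ _ iQ) expr0n /= !if_same.
rewrite -esum_mkcond esum_fset; last 2 first.
- exact: finite_seq.
- by move=> i _; rewrite lee_fin sqr_ge0.
by rewrite -fsbig_seq // sumEFin.
Qed.

Variables (k : nat) (alpha : {ffun 'I_k -> int} -> R).

Lemma Bvalue_uniq (x : 'I_k -> int -> R) L1 L2 :
  Bvalue alpha x L1 -> Bvalue alpha x L2 -> L1 = L2.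
Proof.
move=> h1 h2; case: (eqVneq L1 L2) => // hd; exfalso.
have dpos : 0 < `|L1 - L2| by rewrite normr_gt0 subr_eq0.
have e2 : 0 < `|L1 - L2| / 2 by rewrite divr_gt0.
have [N1 hN1] := h1 _ e2; have [N2 hN2] := h2 _ e2.
have := hN1 (maxn N1 N2) (leq_maxl _ _); have := hN2 (maxn N1 N2) (leq_maxr _ _).
set b := boxsum alpha x (maxn N1 N2) => hb2 hb1.
have : `|L1 - L2| <= `|b - L1| + `|b - L2|.
  by rewrite (_ : L1 - L2 = (b - L2) - (b - L1)); [apply: le_trans (ler_normB _ _) _; rewrite addrC | ring].
lra.
Qed.

Hypothesis hB : B_bounded alpha.

Lemma le_Bnorm (x : 'I_k -> int -> R) L :
  (forall j, l2Z (x j) /\ l2normZ (x j) = 1) -> Bvalue alpha x L -> `|L| <= B_norm alpha.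
Proof.
move=> hx hL; have [C hC] := hB.
apply: sup_upper_bound; last by exists x, L.
split; first by exists `|L|, x, L.
exists C => _ [y [L' [hy [hL' ->]]]].
have [L'' [hL'' hb]] := hC y (fun j => (hy j).1).
rewrite (Bvalue_uniq hL' hL'').
apply: le_trans hb _; rewrite big1 ?mulr1 // => j _; exact: (hy j).2.
Qed.
End Row.

Section Row2.
Variables (R : realType) (k : nat) (hk : (0 < k)%N) (alpha : {ffun 'I_k -> int} -> R).

Lemma lst_lt : (k.-1 < k)%N. Proof. by rewrite ltn_predL. Qed.
Definition lst : 'I_k := Ordinal lst_lt.
Definition upd (p : {ffun 'I_k -> int}) (q : int) : {ffun 'I_k -> int} :=
  [ffun j => if j == lst then q else p j].

Definition toI (N : nat) (z : int) : 'I_(N.*2.+1) := inord (absz (z + N%:Z)).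

Lemma idx_toI N z : (absz z <= N)%N -> idxN (toI N z) = z.
Proof.
move=> hz; rewrite /idxN /toI inordK; last by lia.
lia.
Qed.

Lemma toI_idx N (t : 'I_(N.*2.+1)) : toI N (idxN t) = t.
Proof.
apply: val_inj; rewrite /toI /idxN /= inordK; have := ltn_ord t; lia.
Qed.

Definition xrow (p : {ffun 'I_k -> int}) (y : int -> R) : 'I_k -> int -> R :=
  fun j n => if j == lst then y n else (n == p j)%:R.

Lemma Bvalue_row (p : {ffun 'I_k -> int}) (Q : seq int) (y : int -> R) :
  (forall j, j != lst -> p j != 0) -> uniq Q -> all (fun q => q != 0) Q ->
  (forall n, n \notin Q -> y n = 0) ->
  Bvalue alpha (xrow p y)
    (\sum_(q <- Q) alpha (upd p q) * y q).
Proof.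
move=> hp uQ nz yQ eps eps0.
set x := xrow p y.
exists (maxn (\max_(j < k) absz (p j)) (\max_(q <- Q) absz q)) => N hN.
suff -> : boxsum alpha x N = \sum_(q <- Q) alpha (upd p q) * y q.
  by rewrite subrr normr0.
have bnd : forall q j, q \in Q -> (absz (upd p q j) <= N)%N.
  move=> q j qQ; rewrite /upd ffunE; case: eqP => _.
    by apply: leq_trans hN; apply: leq_trans (leq_maxr _ _); exact: leq_bigmax_seq.
  by apply: leq_trans hN; apply: leq_trans (leq_maxl _ _); exact: (leq_bigmax (F := fun j => absz (p j))).
set psi := fun q => [ffun j => toI N (upd p q j)].
have psiK : forall q, q \in Q -> [ffun j => idxN (psi q j)] = upd p q.
  by move=> q qQ; apply/ffunP => j; rewrite !ffunE idx_toI //; have := bnd q j qQ; rewrite /upd ffunE.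
have key : forall t : {ffun 'I_k -> 'I_(N.*2.+1)},
    \prod_(j < k) x j (idxN (t j)) != 0 -> t \in map psi Q.
  move=> t /prodf_neq0 hne.
  have hl : idxN (t lst) \in Q.
    apply/negPn/negP => hn; have := hne lst isT; rewrite /x /xrow eqxx yQ //.
    by rewrite eqxx.
  apply/mapP; exists (idxN (t lst)) => //; apply/ffunP => j.
  rewrite !ffunE; case: (eqVneq j lst) => [->|jn]; first by rewrite toI_idx.
  have := hne j isT; rewrite /x /xrow (negbTE jn).
  case: (idxN (t j) =P p j) => [<- _|_]; first by rewrite toI_idx.
  by rewrite mulr0n eqxx.
rewrite /boxsum (bigID (fun t => t \in map psi Q)) /= [X in _ + X]big1 ?addr0; last first.
  move=> t /andP [_ tn]; case: (eqVneq (\prod_(j < k) x j (idxN (t j))) 0) => [->|/key].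
    by rewrite mulr0.
  by rewrite (negbTE tn).
have uP : uniq (map psi Q).
  rewrite map_inj_in_uniq // => q1 q2 q1Q q2Q h.
  have := congr1 (fun f : {ffun 'I_k -> 'I_(N.*2.+1)} => idxN (f lst)) h.
  rewrite /psi /= !ffunE /= eqxx !idx_toI //.
  - by have := bnd q2 lst q2Q; rewrite /upd ffunE eqxx.
  - by have := bnd q1 lst q1Q; rewrite /upd ffunE eqxx.
rewrite (eq_bigl (fun t => t \in map psi Q)); last first.
  move=> t; apply/idP/idP => [/andP [] //|tP]; rewrite tP andbT.
  case/mapP: tP => q qQ ->; apply/forallP => j; rewrite /psi ffunE idx_toI; last exact: bnd.
  rewrite /upd ffunE; case: (eqVneq j lst) => [_|jn]; last exact: hp.
  by move/allP: nz => /(_ q qQ).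
rewrite -big_uniq // big_map; apply: eq_big_seq => q qQ.
rewrite psiK //; congr (_ * _).
rewrite (bigD1 lst) //= big1 ?mulr1.
  by rewrite /x /xrow eqxx ffunE idx_toI ?bnd // /upd ffunE eqxx.
move=> j jn; rewrite /x /xrow (negbTE jn) ffunE idx_toI ?bnd //.
by rewrite /upd ffunE (negbTE jn) eqxx.
Qed.

Hypothesis hB : B_bounded alpha.

Lemma row_bound (p : {ffun 'I_k -> int}) (Q : seq int) :
  (forall j, j != lst -> p j != 0) -> uniq Q -> all (fun q => q != 0) Q ->
  \sum_(q <- Q) alpha (upd p q) ^+ 2 <= B_norm alpha ^+ 2.
Proof.
move=> hp uQ nz.
set a := \sum_(q <- Q) _.
have a0 : 0 <= a by apply: sumr_ge0 => q _; exact: sqr_ge0.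
case: (eqVneq a 0) => [->|an0]; first exact: sqr_ge0.
have apos : 0 < a by rewrite lt_def an0.
set c := Num.sqrt a.
have cpos : 0 < c by rewrite sqrtr_gt0.
have c2 : c ^+ 2 = a by rewrite sqr_sqrtr.
set y := fun n => if n \in Q then alpha (upd p n) / c else 0.
have yQ : forall n, n \notin Q -> y n = 0 by move=> n /negbTE; rewrite /y => ->.
have hL := Bvalue_row hp uQ nz yQ.
have Lc : \sum_(q <- Q) alpha (upd p q) * y q = c.
  rewrite (eq_big_seq (fun q => alpha (upd p q) ^+ 2 / c)); last first.
    by move=> q qQ; rewrite /y qQ mulrA expr2.
  rewrite -mulr_suml -/a -c2 expr2 -mulrA divff ?mulr1 //; exact: lt0r_neq0.
rewrite Lc in hL.
have hx : forall j, l2Z (xrow p y j) /\ l2normZ (xrow p y j) = 1.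
  move=> j; rewrite /l2Z /l2normZ /xrow.
  case: (eqVneq j lst) => jl.
    rewrite (esum_seq uQ nz yQ).
    have -> : \sum_(q <- Q) y q ^+ 2 = 1.
      rewrite (eq_big_seq (fun q => alpha (upd p q) ^+ 2 / c ^+ 2)); last first.
        by move=> q qQ; rewrite /y qQ expr_div_n.
      by rewrite -mulr_suml -/a c2 divff.
    by split; [exact: ltry | rewrite /= sqrtr1].
  rewrite (@esum_seq _ (fun n => (n == p j)%:R) [:: p j]) //; last first.
  - by move=> n; rewrite inE => /negbTE ->.
  - by rewrite /= hp.
  rewrite big_seq1 eqxx expr1n.
  by split; [exact: ltry | rewrite /= sqrtr1].
have hc := le_Bnorm hB hx hL; rewrite ger0_norm in hc; last exact: ltW cpos.
rewrite -c2; apply: lerXn2r; rewrite ?nnegrE; [exact: ltW | | exact: hc].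
exact: le_trans (ltW cpos) hc.
Qed.
End Row2.
Lemma sum_le_inj (R : realDomainType) (X : eqType) (D : finType) (P : pred D)
  (phi : D -> X) (h : X -> R) (s : seq X) :
  uniq s -> {in P &, injective phi} ->
  (forall x, x \in s -> exists2 d, P d & phi d = x) -> (forall x, 0 <= h x) ->
  \sum_(x <- s) h x <= \sum_(d | P d) h (phi d).
Proof.
move=> us inj cov h0.
have -> : \sum_(d | P d) h (phi d) = \sum_(x <- map phi [seq d <- index_enum D | P d]) h x.
  by rewrite big_map big_filter.
set L := map phi _.
have uL : uniq L.
  rewrite map_inj_in_uniq ?filter_uniq ?index_enum_uniq //.
  by move=> a b; rewrite !mem_filter => /andP [Pa _] /andP [Pb _]; apply: inj.
apply: (@le_trans _ _ (\sum_(x <- L | x \in s) h x)); last first.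
  by rewrite [X in _ <= X](bigID (fun x => x \in s)) /= lerDl sumr_ge0.
have pe : perm_eq [seq x <- L | x \in s] s; last by rewrite -(perm_big _ pe) big_filter.
apply: uniq_perm => //; first exact: filter_uniq.
move=> x; rewrite mem_filter; apply/idP/idP => [/andP [] //|xs].
rewrite xs /=; have [d Pd <-] := cov x xs; apply: map_f; rewrite mem_filter Pd mem_index_enum //.
Qed.

Section Core.
Variables (R : realType) (k : nat) (hk : (0 < k)%N) (alpha : {ffun 'I_k -> int} -> R).
Hypothesis hB : B_bounded alpha.
Variables (w : int -> R) (s0 : R).
Hypothesis w0 : forall z, 0 <= w z.
Hypothesis s00 : 0 <= s0.
Hypothesis tr : forall G : seq int, uniq G -> all (fun q => q != 0) G -> \sum_(q <- G) w q <= s0.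

Lemma core (s : seq {ffun 'I_k -> int}) : uniq s -> (forall i, i \in s -> Zstar_k i) ->
  \sum_(i <- s) alpha i ^+ 2 * \prod_(j < k | (j < k.-1)%N) w (i j)
    <= B_norm alpha ^+ 2 * s0 ^+ k.-1.
Proof.
case: s => [|i0 s'] us sZ.
  by rewrite big_nil mulr_ge0 ?sqr_ge0 ?exprn_ge0.
set s := i0 :: s' in us sZ *.
set G := undup (flatten (map (fun i : {ffun 'I_k -> int} => map (fun j => i j) (enum 'I_k)) s)).
have memG : forall i j, i \in s -> i j \in G.
  move=> i j iS; rewrite mem_undup; apply/flatten_mapP; exists i => //.
  by apply: map_f; rewrite mem_enum.
have nzG : all (fun q => q != 0) G.
  apply/allP => z; rewrite mem_undup => /flatten_mapP [i iS /mapP [j _ ->]].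
  exact: sZ i iS j.
have uG : uniq G := undup_uniq _.
set n := size G.
have n0 : (index (i0 (lst hk)) G < n)%N by rewrite index_mem memG ?mem_head.
set q0 : 'I_n := Ordinal n0.
set g : 'I_n -> int := fun q => nth 0 G q.
have ginj : injective g.
  move=> a b /eqP; rewrite /g nth_uniq // => /eqP h; exact: val_inj.
have gG : forall q, g q \in G by move=> q; rewrite /g mem_nth.
have Pkl : forall j : 'I_k, (j < k.-1)%N = (j != lst hk).
  move=> j; rewrite -val_eqE /=; have := ltn_ord j; lia.
set phi := fun d : {ffun 'I_k -> 'I_n} * 'I_n =>
  [ffun j => g (if j == lst hk then d.2 else d.1 j)].
set Pf := pffun_on q0 (fun j : 'I_k => (j < k.-1)%N) (fun _ : 'I_n => true).
set h := fun i : {ffun 'I_k -> int} => alpha i ^+ 2 * \prod_(j < k | (j < k.-1)%N) w (i j).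
have Pfl : forall f, f \in Pf -> f (lst hk) = q0.
  move=> f /familyP /(_ (lst hk)).
  by rewrite -[lst hk \in _]/((k.-1 < k.-1)%N) ltnn inE => /eqP.
apply: (le_trans (@sum_le_inj _ _ _ (fun d => d.1 \in Pf) phi h s us _ _ _)).
- move=> [f1 a1] [f2 a2] P1 P2 e.
  have {}P1 : f1 \in Pf := P1; have {}P2 : f2 \in Pf := P2.
  have ej : forall j, (if j == lst hk then a1 else f1 j) = (if j == lst hk then a2 else f2 j).
    by move=> j; apply: ginj; have := congr1 (fun F : {ffun 'I_k -> int} => F j) e; rewrite /phi !ffunE.
  have a12 : a1 = a2 by have := ej (lst hk); rewrite eqxx.
  congr pair => //; apply/ffunP => j; case: (eqVneq j (lst hk)) => [->|jn].
    by rewrite !Pfl.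
  by have := ej j; rewrite (negbTE jn).
- move=> i iS.
  have it : forall j, (index (i j) G < n)%N by move=> j; rewrite index_mem memG.
  pose t := fun j => Ordinal (it j).
  exists ([ffun j => if j == lst hk then q0 else t j], t (lst hk)).
    rewrite /=; apply/familyP => j; rewrite ffunE.
    case: (eqVneq j (lst hk)) => [->|jn].
      by rewrite -[lst hk \in _]/((k.-1 < k.-1)%N) ltnn inE.
    by rewrite -[j \in _]/((j < k.-1)%N) Pkl jn.
  apply/ffunP => j; rewrite /phi !ffunE /=; case: (eqVneq j (lst hk)) => [->|jn] /=;
    by rewrite /g /= nth_index ?memG.
- by move=> x; rewrite /h mulr_ge0 ?sqr_ge0 // prodr_ge0.
rewrite (eq_bigl (fun d => (d.1 \in Pf) && true)); last by move=> d; rewrite andbT.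
rewrite -(pair_big_dep (fun f => f \in Pf) (fun _ _ => true) (fun f q => h (phi (f, q)))) /=.
apply: (@le_trans _ _ (\sum_(f | f \in Pf) B_norm alpha ^+ 2 * \prod_(j < k | (j < k.-1)%N) w (g (f j)))).
  apply: ler_sum => f fP.
  have eqW : forall q, \prod_(j < k | (j < k.-1)%N) w (phi (f, q) j) =
      \prod_(j < k | (j < k.-1)%N) w (g (f j)).
    by move=> q; apply: eq_bigr => j jP; rewrite /phi ffunE /= ifN // -Pkl.
  rewrite /h; under eq_bigr => q _ do rewrite eqW.
  rewrite -mulr_suml; apply: ler_wpM2r; first exact: prodr_ge0.
  set p := [ffun j => g (f j)].
  have phiu : forall q, phi (f, q) = upd hk p (g q).
    by move=> q; apply/ffunP => j; rewrite /phi /upd !ffunE /=; case: eqP.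
  under eq_bigr => q _ do rewrite phiu.
  have -> : \sum_(q : 'I_n) alpha (upd hk p (g q)) ^+ 2 =
      \sum_(z <- map g (index_enum 'I_n)) alpha (upd hk p z) ^+ 2 by rewrite big_map.
  apply: (@row_bound R k hk alpha hB p).
  - by move=> j _; rewrite ffunE; move/allP: nzG; apply; exact: gG.
  - by rewrite map_inj_uniq ?index_enum_uniq.
  - by apply/allP => z /mapP [q _ ->]; move/allP: nzG; apply; exact: gG.
rewrite -mulr_sumr; apply: ler_wpM2l; first exact: sqr_ge0.
rewrite -(big_distr_big q0 (fun j : 'I_k => (j < k.-1)%N) (fun _ => true) (fun j q => w (g q))).
apply: (@le_trans _ _ (\prod_(j < k | (j < k.-1)%N) s0)).
  apply: ler_prod => j _; rewrite sumr_ge0 //=.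
  have -> : \sum_(q : 'I_n) w (g q) = \sum_(z <- map g (index_enum 'I_n)) w z by rewrite big_map.
  apply: tr; first by rewrite map_inj_uniq ?index_enum_uniq.
  by apply/allP => z /mapP [q _ ->]; move/allP: nzG; apply; exact: gG.
rewrite (big_ord_narrow (F := fun _ => s0) (leq_pred k)) prodr_const card_ord.
by [].
Qed.
End Core.

Unset Implicit Arguments.

Theorem corollary5p13 (R : realType) (H : lmodType R)
  (ip : H -> H -> R) (J : H -> H) (hH : is_complex_Hilbert ip J)
  (T : H -> H) (hT : bounded_clinear ip J T)
  (E : R -> H) (hE : spanning_T_eigenfield ip J T E)
  (Rop : H -> H) (hR : is_covariance_of ip J E Rop)
  (e : nat -> H) (sigma : nat -> R) (he : is_ONB ip J e)
  (heig : forall j, (0 < j)%N -> Rop (e j) = (2 * sigma j ^+ 2) *: e j)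
  (m : probability (HBorel ip) R) (hm : is_gaussian_cov ip Rop m)
  (f : HBorel ip -> R) (hf : L2R m f)
  (k : nat) (hk : (0 < k)%N)
  (alpha : {ffun 'I_k -> int} -> R)
  (halpha : forall i, Zstar_k i ->
     exists w : HBorel ip -> R,
       is_wick m (fun (l : int) (u : HBorel ip) => ip (frake J e l) u) k
         (fun u : HBorel ip => \prod_(j < k) ip (frake J e (i j)) u) w /\
       alpha i = (\int[m]_(u in setT) (f u * w u)) /
                 (k`!%:R * \prod_(j < k) sigZ sigma (i j) ^+ 2))
  (hB : B_bounded alpha) :
  let S := \esum_(i in @Zstar_k k)
             ((alpha i) ^+ 2 * \prod_(j < k | (j < k.-1)%N) sigZ sigma (i j) ^+ 2)%:E in
  (S < +oo)%E /\ (S <= (B_norm alpha ^+ 2 * E2sq ip E ^+ k.-1)%:E)%E.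
Proof.
move=> S.
have tr := trace_bound hH hE he hR heig.
have w0 : forall z : int, 0 <= sigZ sigma z ^+ 2 by move=> z; exact: sqr_ge0.
have hle : (S <= (B_norm alpha ^+ 2 * E2sq ip E ^+ k.-1)%:E)%E.
  rewrite /S; apply: ge_ereal_sup => _ [A [finA AZ] <-].
  rewrite fsbig_finite //= sumEFin lee_fin.
  apply: (core hk hB w0 (E2_ge0 hH E) tr); first exact: finmap.fset_uniq.
  move=> i; rewrite (in_fset_set finA) => /set_mem; exact: AZ.
split => //; apply: le_lt_trans hle _; exact: ltry.
Qed.
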